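(* Let $N$ be a positive integer. For every integer $n\ge 1$, $$B_{N,n}=n!\sum_{\substack{t_1+2t_2+\cdots+nt_n=n\\ t_1,\dots,t_n\ge 0}}\frac{(t_1+\cdots+t_n)!}{t_1!\cdots t_n!}(-1)^{t_1+\cdots+t_n}\left(\frac{N!}{(N+1)!}\right)^{t_1}\left(\frac{N!}{(N+2)!}\right)^{t_2}\cdots\left(\frac{N!}{(N+n)!}\right)^{t_n},$$ and $$\frac{N!}{(N+n)!}=\det(d_{ij})_{1\le i,j\le n},$$ where $d_{ij}=(-1)^{i-j+1}\dfrac{B_{N,i-j+1}}{(i-j+1)!}$ if $j\le i$, $d_{ij}=1$ if $j=i+1$, and $d_{ij}=0$ if $j>i+1$.
   Context: For a positive integer $N$, the hypergeometric Bernoulli numbers $B_{N,n}$ ($n\ge 0$) are defined by $$\frac{x^N/N!}{e^x-\sum_{n=0}^{N-1}x^n/n!}=\sum_{n=0}^\infty B_{N,n}\frac{x^n}{n!}.$$ *)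

(* Defs.v *)
From HB Require Import structures.
From mathcomp Require Import all_boot all_order all_algebra.
Set Implicit Arguments. Unset Strict Implicit. Unset Printing Implicit Defensive.
Import Order.TTheory GRing.Theory Num.Theory.
Local Open Scope ring_scope.

(* Coefficients of the formal power series  e^x - sum_{n<N} x^n/n!  *)
Definition tail_exp_coef (N m : nat) : rat :=
  if (N <= m)%N then (m`!%:R)^-1 else 0.

(* B : nat -> rat is the sequence of hypergeometric Bernoulli numbers B_{N,n}:
   as formal power series,
     x^N/N! = (e^x - sum_{n<N} x^n/n!) * sum_n B n x^n/n!,
   i.e. for every m, comparing the coefficients of x^m. This is exactly the
   defining identity  (x^N/N!)/(e^x - sum_{n<N} x^n/n!) = sum_n B_{N,n} x^n/n!
   (the denominator has nonzero x^N coefficient, and the quotient is a power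
   series; the solution B is unique). *)
Definition is_hyper_bernoulli (N : nat) (B : nat -> rat) : Prop :=
  forall m : nat,
    (if m == N then (N`!%:R)^-1 else 0) =
    \sum_(k < m.+1) tail_exp_coef N (m - k) * (B k / (k`!%:R)).

(* The matrix (d_ij)_{1<=i,j<=n}, with 0-based indices i j : 'I_n. *)
Definition dmat (n : nat) (B : nat -> rat) : 'M[rat]_n :=
  \matrix_(i < n, j < n)
    if (j <= i)%N then
      (-1) ^+ (i - j).+1 * (B (i - j).+1 / ((i - j).+1`!%:R))
    else if j == i.+1 :> nat then 1 else 0.

(* Main.v *)
Require Import Defs.
From HB Require Import structures.
From mathcomp Require Import all_boot all_order all_algebra.
From mathcomp Require Import ring zify.
Import Order.TTheory GRing.Theory Num.Theory.
Local Open Scope ring_scope.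

Definition aN (N j : nat) : rat := N`!%:R / (N + j)`!%:R.
Lemma fact_neq0 (k : nat) : (k`!%:R : rat) != 0.
Proof. by rewrite pnatr_eq0 -lt0n fact_gt0. Qed.

Definition wt {n} (t : {ffun 'I_n -> 'I_n.+1}) : nat := (\sum_(i < n) (i.+1 * t i))%N.
Definition sz {n} (t : {ffun 'I_n -> 'I_n.+1}) : nat := (\sum_(i < n) (t i : nat))%N.
Definition pf {n} (t : {ffun 'I_n -> 'I_n.+1}) : nat := (\prod_(i < n) (t i)`!)%N.
Definition Mt {n} (t : {ffun 'I_n -> 'I_n.+1}) : rat := (sz t)`!%:R / (pf t)%:R.
Definition yt N {n} (t : {ffun 'I_n -> 'I_n.+1}) : rat := \prod_(i < n) (- aN N i.+1) ^+ t i.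
Definition incr {n} (i : 'I_n) (s : {ffun 'I_n -> 'I_n.+1}) : {ffun 'I_n -> 'I_n.+1} :=
  [ffun j => if j == i then inord (s j).+1 else s j].
Definition decr {n} (i : 'I_n) (s : {ffun 'I_n -> 'I_n.+1}) : {ffun 'I_n -> 'I_n.+1} :=
  [ffun j => if j == i then inord (s j).-1 else s j].

Lemma decr_i n (i : 'I_n) (t : {ffun 'I_n -> 'I_n.+1}) : decr i t i = (t i).-1 :> nat.
Proof. rewrite ffunE eqxx inordK //; have := ltn_ord (t i); lia. Qed.
Lemma decr_j n (i j : 'I_n) (t : {ffun 'I_n -> 'I_n.+1}) : j != i -> decr i t j = t j.
Proof. by rewrite ffunE => /negPf ->. Qed.
Lemma incr_i n (i : 'I_n) (t : {ffun 'I_n -> 'I_n.+1}) : (t i < n)%N -> incr i t i = (t i).+1 :> nat.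
Proof. by move=> h; rewrite ffunE eqxx inordK. Qed.
Lemma incr_j n (i j : 'I_n) (t : {ffun 'I_n -> 'I_n.+1}) : j != i -> incr i t j = t j.
Proof. by rewrite ffunE => /negPf ->. Qed.

Lemma decr_incr n (i : 'I_n) (s : {ffun 'I_n -> 'I_n.+1}) : (s i < n)%N -> decr i (incr i s) = s.
Proof.
move=> h; apply/ffunP => j; case: (eqVneq j i) => [->|ne].
  by apply: val_inj => /=; rewrite decr_i incr_i.
by rewrite decr_j // incr_j.
Qed.
Lemma incr_decr n (i : 'I_n) (s : {ffun 'I_n -> 'I_n.+1}) : (0 < s i)%N -> incr i (decr i s) = s.
Proof.
move=> h; apply/ffunP => j; case: (eqVneq j i) => [->|ne].
  apply: val_inj => /=; rewrite incr_i decr_i //; last by have := ltn_ord (s i); lia.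
  lia.
by rewrite incr_j // decr_j.
Qed.

Lemma sz_decr n (i : 'I_n) (t : {ffun 'I_n -> 'I_n.+1}) : (0 < t i)%N -> sz t = (sz (decr i t)).+1.
Proof.
move=> h; rewrite /sz (bigD1 i) //= [X in _ = X.+1](bigD1 i) //= decr_i.
rewrite [X in _ = (_ + X).+1](eq_bigr (fun j => (t j : nat))); last by move=> j /decr_j ->.
by rewrite -addSn prednK.
Qed.
Lemma pf_decr n (i : 'I_n) (t : {ffun 'I_n -> 'I_n.+1}) : (0 < t i)%N -> pf t = (t i * pf (decr i t))%N.
Proof.
move=> h; rewrite /pf (bigD1 i) //= [X in _ = (_ * X)%N](bigD1 i) //= decr_i.
rewrite [in RHS](eq_bigr (fun j => (t j)`!)); last by move=> j /decr_j ->.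
by rewrite mulnA; congr (_ * _)%N; case: (nat_of_ord (t i)) h => [|k] // _; rewrite factS.
Qed.
Lemma yt_decr N n (i : 'I_n) (t : {ffun 'I_n -> 'I_n.+1}) : (0 < t i)%N -> yt N t = (- aN N i.+1) * yt N (decr i t).
Proof.
move=> h; rewrite /yt (bigD1 i) //= [X in _ = (_ * X)](bigD1 i) //= decr_i.
rewrite [in RHS](eq_bigr (fun j : 'I_n => (- aN N j.+1) ^+ t j)); last by move=> j /decr_j ->.
by rewrite mulrA -exprS prednK.
Qed.
Lemma wt_incr n (i : 'I_n) (s : {ffun 'I_n -> 'I_n.+1}) : (s i < n)%N -> wt (incr i s) = (wt s + i.+1)%N.
Proof.
move=> h; rewrite /wt (bigD1 i) //= [X in _ = (X + _)%N](bigD1 i) //= incr_i //.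
rewrite [in LHS](eq_bigr (fun j : 'I_n => (j.+1 * s j)%N)); last by move=> j /incr_j ->.
lia.
Qed.
Lemma wt_ge n (i : 'I_n) (s : {ffun 'I_n -> 'I_n.+1}) : (i.+1 * s i <= wt s)%N.
Proof. by rewrite /wt (bigD1 i) //= leq_addr. Qed.

Lemma Mt_decr n (i : 'I_n) (t : {ffun 'I_n -> 'I_n.+1}) : (0 < t i)%N ->
  Mt (decr i t) = (sz t).-1`!%:R * (t i)%:R / (pf t)%:R.
Proof.
move=> h; rewrite /Mt (pf_decr n i t h) (sz_decr n i t h) /= natrM.
have h1 : ((t i : nat)%:R : rat) != 0 by rewrite pnatr_eq0 -lt0n.
have h2 : ((pf (decr i t))%:R : rat) != 0 by rewrite pnatr_eq0 -lt0n /pf prodn_gt0 // => j; rewrite fact_gt0.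
field. by rewrite h1 h2.
Qed.

Lemma pascal n (t : {ffun 'I_n -> 'I_n.+1}) : (0 < sz t)%N ->
  Mt t = \sum_(i < n | (0 < t i)%N) Mt (decr i t).
Proof.
move=> h.
rewrite (eq_bigr (fun i : 'I_n => (sz t).-1`!%:R / (pf t)%:R * (t i : nat)%:R)); last first.
  by move=> i hi; rewrite Mt_decr // mulrAC.
rewrite -big_distrr /= big_mkcond /=.
rewrite (eq_bigr (fun i : 'I_n => ((t i : nat)%:R : rat))); last first.
  by move=> i _; case: ifP => //; rewrite lt0n => /negbFE /eqP ->.
rewrite -natr_sum -/(sz t) /Mt mulrAC -natrM.
by rewrite mulnC -{1}(prednK h) factS prednK.
Qed.

Definition cc N n m : rat :=
  \sum_(t : {ffun 'I_n -> 'I_n.+1} | wt t == m) Mt t * yt N t.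

Lemma pred_char n m (i : 'I_n) (s : {ffun 'I_n -> 'I_n.+1}) : (0 < m)%N -> (m <= n)%N ->
  ((wt (incr i s) == m) && (0 < incr i s i)%N) && (decr i (incr i s) == s)
  = (i < m)%N && (wt s == m - i.+1)%N.
Proof.
move=> m0 mn.
case: (ltnP (s i) n) => hs.
  rewrite decr_incr // eqxx wt_incr // incr_i // andbT /=.
  rewrite ltn0Sn andbT; apply/eqP/andP => [?|[? /eqP ?]]; first (split; [lia | apply/eqP; lia]).
  lia.
have hsn : nat_of_ord (s i) = n by have := ltn_ord (s i); lia.
have -> : (decr i (incr i s) == s) = false.
  apply/eqP => E; have := congr1 (fun f : {ffun 'I_n -> 'I_n.+1} => nat_of_ord (f i)) E.
  rewrite /= decr_i /incr ffunE eqxx /inord val_insubd hsn ltnn /=; lia.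
have := wt_ge n i s; rewrite hsn andbF => hw.
have : (n <= i.+1 * n)%N by apply: leq_pmull.
move=> hn; case: (i < m)%N => //=; apply/esym/negbTE/eqP; nia.
Qed.

Lemma sz_pos n (t : {ffun 'I_n -> 'I_n.+1}) : (0 < wt t)%N -> (0 < sz t)%N.
Proof.
rewrite !lt0n; apply: contra => /eqP h; rewrite /wt; apply/eqP; apply: big1 => i _.
move: h; rewrite /sz => /eqP; rewrite sum_nat_eq0 => /forallP /(_ i) /implyP.
by move=> /(_ isT) /eqP ->; rewrite muln0.
Qed.

Lemma cc_rec N n m : (0 < m)%N -> (m <= n)%N ->
  cc N n m = \sum_(i < n) (- aN N i.+1) * (if (i < m)%N then cc N n (m - i.+1)%N else 0).
Proof.
move=> m0 mn; rewrite /cc.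
rewrite (eq_bigr (fun t : {ffun 'I_n -> 'I_n.+1} => \sum_(i < n | (0 < t i)%N) (- aN N i.+1) * (Mt (decr i t) * yt N (decr i t)))); last first.
  move=> t /eqP wtm; have hs : (0 < sz t)%N by apply: sz_pos; rewrite wtm.
  rewrite (pascal n t hs) big_distrl /=; apply: eq_bigr => i hi.
  by rewrite (yt_decr N n i t hi) mulrCA.
rewrite (exchange_big_dep predT) //=; apply: eq_bigr => i _; rewrite -big_distrr /=; congr (_ * _).
rewrite (reindex_onto (incr i) (decr i)) /=; last by move=> t /andP[_ h]; apply: incr_decr.
case: ifP => him.
  apply: eq_big => s; first by rewrite pred_char // him.
  by move=> /andP[_ /eqP ->].
apply: big_pred0 => s; by rewrite pred_char // him.
Qed.

Lemma cc0 N n : cc N n 0 = 1.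
Proof.
pose t0 : {ffun 'I_n -> 'I_n.+1} := [ffun _ => ord0].
rewrite /cc (big_pred1 t0) => [|t].
  rewrite /Mt /yt /sz /pf big1 => [|i _]; last by rewrite ffunE.
  rewrite big1 => [|i _]; last by rewrite ffunE.
  by rewrite big1 ?divr1 ?mul1r // => i _; rewrite ffunE expr0.
rewrite /= /pred1 /=.
apply/eqP/eqP => [h | ->].
  apply/ffunP => i; rewrite ffunE; apply: val_inj => /=.
  move: h; rewrite /wt => /eqP; rewrite sum_nat_eq0 => /forallP /(_ i) /implyP /(_ isT).
  by rewrite muln_eq0 /= => /eqP.
by rewrite /wt big1 // => i _; rewrite ffunE muln0.
Qed.

Definition bB (B : nat -> rat) (k : nat) : rat := B k / k`!%:R.


Lemma recC N B : is_hyper_bernoulli N B -> forall p,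
  \sum_(k < p.+1) aN N (p - k) * bB B k = (p == 0%N)%:R.
Proof.
move=> H p; have := H (N + p)%N.
have -> : (N + p == N) = (p == 0%N) by rewrite -{2}(addn0 N) eqn_add2l.
move=> Hp.
have -> : (p == 0%N)%:R = N`!%:R * (if p == 0%N then (N`!%:R)^-1 else 0 : rat).
  by case: (p == 0%N); rewrite ?mulr0 // divff ?fact_neq0.
rewrite Hp big_distrr /=.
rewrite (big_ord_widen _ (fun k => aN N (p - k) * bB B k) (_ : p.+1 <= (N + p).+1)%N); last by lia.
rewrite big_mkcond /=; apply: eq_bigr => k _.
rewrite /tail_exp_coef.
have hk := ltn_ord k.
case: ifP => hkp.
  have -> : (N <= N + p - k)%N = true by lia.
  have -> : (N + p - k = N + (p - k))%N by lia.
  by rewrite /aN /bB !mulrA.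
have -> : (N <= N + p - k)%N = false by lia.
by rewrite mul0r mulr0.
Qed.

Lemma recb0 N B : is_hyper_bernoulli N B -> bB B 0 = 1.
Proof.
move=> H; have := recC N B H 0; rewrite big_ord1 /= /aN addn0 divff ?fact_neq0 //.
by rewrite mul1r.
Qed.

Lemma recb N B : is_hyper_bernoulli N B -> forall p, (0 < p)%N ->
  bB B p = \sum_(i < p) (- aN N i.+1) * bB B (p - i.+1).
Proof.
move=> H p p0; have := recC N B H p; rewrite big_ord_recr /= subnn.
rewrite /aN addn0 divff ?fact_neq0 // mul1r.
have -> : (p == 0%N) = false by lia.
move=> /addr0_eq <-; rewrite -sumrN (reindex_inj rev_ord_inj) /=.
apply: eq_bigr => i _; rewrite mulNr; congr (- (_ * _)).
have hi := ltn_ord i.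
by have -> : (p - (p - i.+1))%N = i.+1 by lia.
Qed.

Lemma b_eq_c N B n : is_hyper_bernoulli N B -> forall m, (m <= n)%N -> bB B m = cc N n m.
Proof.
move=> H; elim/ltn_ind => m IH mn.
case: (posnP m) => [->|m0]; first by rewrite (recb0 N B H) cc0.
rewrite (recb N B H m m0) cc_rec //.
rewrite (big_ord_widen n (fun i => - aN N i.+1 * bB B (m - i.+1)) mn) big_mkcond /=.
apply: eq_bigr => i _; case: ifP => h; last by rewrite mulr0.
by rewrite IH //; lia.
Qed.

Lemma sum_window (F : nat -> rat) m j i : (j <= i)%N -> (i < m)%N ->
  (forall k, (k < j)%N || (i < k)%N -> F k = 0) ->
  \sum_(k < m) F k = \sum_(l < (i - j).+1) F (l + j)%N.
Proof.
move=> hji him hF.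
have hjm : (j <= m)%N by lia.
have hj1 : (j <= i.+1)%N by lia.
rewrite -(big_mkord xpredT) (big_cat_nat (leq0n j) hjm) /=.
rewrite (big_cat_nat hj1 him) /=.
rewrite [\sum_(0 <= k < j) F k]big1_seq => [|k]; last first.
  by rewrite mem_index_iota => /andP[_ /andP[_ h]]; apply: hF; rewrite h.
rewrite [\sum_(i.+1 <= k < m) F k]big1_seq => [|k]; last first.
  by rewrite mem_index_iota => /andP[_ /andP[h _]]; apply: hF; rewrite h orbT.
rewrite add0r addr0 -{1}(add0n j) big_addn big_mkord.
by have -> : (i.+1 - j = (i - j).+1)%N by lia.
Qed.

Definition Tm B n : 'M[rat]_n.+1 := \matrix_(i, j) if (j <= i)%N then bB B (i - j) else 0.
Definition Am N n : 'M[rat]_n.+1 := \matrix_(i, j) if (j <= i)%N then aN N (i - j) else 0.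

Lemma AT N B n : is_hyper_bernoulli N B -> Am N n *m Tm B n = 1%:M.
Proof.
move=> H; apply/matrixP => i j; rewrite !mxE.
rewrite (eq_bigr (fun k : 'I_n.+1 => (if (k <= i)%N then aN N (i - k) else 0) *
   (if (j <= k)%N then bB B (k - j) else 0))); last by move=> k _; rewrite !mxE.
case: (leqP (j : nat) i) => hji; last first.
  rewrite big1 => [|k _]; last first.
    case: (leqP (k:nat) i) => hk; case: (leqP (j:nat) k) => hk2; rewrite ?mulr0 ?mul0r //; lia.
  have : i != j by apply/eqP => E; move: hji; rewrite E ltnn.
  by move/negPf ->.
rewrite (sum_window (fun k => (if (k <= i)%N then aN N (i - k) else 0) *
   (if (j <= k)%N then bB B (k - j) else 0)) (n.+1) j i) //; last first.
  move=> k /orP[] hk.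
    have -> : (j <= k)%N = false by lia.
    by rewrite mulr0.
  have -> : (k <= i)%N = false by lia.
  by rewrite mul0r.
have E : (i == j) = (i - j == 0)%N.
  by apply/eqP/eqP => [->|h]; [rewrite subnn | apply: val_inj => /=; lia].
rewrite E -(recC N B H (i - j)).
rewrite /=; apply: eq_bigr => l _.
have hl := ltn_ord l.
have -> : (l + j <= i)%N = true by lia.
have -> : (j <= l + j)%N = true by lia.
have -> : (i - (l + j) = i - j - l)%N by lia.
by rewrite addnK.
Qed.

Lemma detT N B n : is_hyper_bernoulli N B -> \det (Tm B n) = 1.
Proof.
move=> H; rewrite det_trig.
  by apply: big1 => i _; rewrite mxE leqnn subnn (recb0 N B H).
by apply/is_trig_mxP => i j hij; rewrite mxE leqNgt hij.
Qed.

Lemma adjT N B n : is_hyper_bernoulli N B -> \adj (Tm B n) = Am N n.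
Proof.
move=> H; have h1 := mul_mx_adj (Tm B n); rewrite (detT N B n H) in h1.
by rewrite -[RHS]mulmx1 -h1 mulmxA (AT N B n H) mul1mx.
Qed.

Lemma an_cof N B n : is_hyper_bernoulli N B ->
  aN N n = (-1) ^+ n * \det (row' ord0 (col' ord_max (Tm B n))).
Proof.
move=> H; have := congr1 (fun M : 'M[rat]_n.+1 => M ord_max ord0) (adjT N B n H).
rewrite /= !mxE /cofactor /= subn0 => <-.
by rewrite add0n.
Qed.

Lemma sign_sq (j : nat) : (-1) ^+ j * (-1) ^+ j = 1 :> rat.
Proof. by rewrite -exprMn mulrNN mulr1 expr1n. Qed.

Lemma dmat_eq N B n : is_hyper_bernoulli N B ->
  dmat n B = diag_mx (\row_(i < n) (-1) ^+ i) *m row' ord0 (col' ord_max (Tm B n))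
             *m diag_mx (\row_(j < n) - (-1) ^+ j).
Proof.
move=> H; apply/matrixP => i j; rewrite mul_mx_diag mul_diag_mx !mxE lift0 lift_max.
case: (leqP (j : nat) i) => hji.
  have -> : (j <= i.+1)%N = true by lia.
  have -> : (i.+1 - j = (i - j).+1)%N by lia.
  have e : (-1) ^+ i = (-1) ^+ (i - j) * (-1) ^+ j :> rat by rewrite -exprD subnK.
  rewrite e /bB; set x := B _ / _.
  transitivity (- ((-1) ^+ (i - j) * x) * ((-1) ^+ j * (-1) ^+ j)); last by ring.
  by rewrite sign_sq exprS; ring.
case: (eqVneq (j : nat) i.+1) => hj.
  rewrite hj ?eqxx leqnn subnn.
  have := recb0 N B H; rewrite /bB => ->.
  rewrite exprS; transitivity ((-1) ^+ i * (-1) ^+ i : rat); first by rewrite sign_sq.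
  ring.
have -> : (j <= i.+1)%N = false by lia.
by rewrite mulr0 mul0r.
Qed.

Lemma det_dmat N B n : is_hyper_bernoulli N B ->
  \det (dmat n B) = (-1) ^+ n * \det (row' ord0 (col' ord_max (Tm B n))).
Proof.
move=> H; rewrite (dmat_eq N B n H) !det_mulmx !det_diag.
rewrite (eq_bigr (fun i : 'I_n => (-1) ^+ i : rat)); last by move=> i _; rewrite mxE.
rewrite [X in _ * X](eq_bigr (fun i : 'I_n => - (-1) ^+ i : rat)); last by move=> i _; rewrite mxE.
rewrite mulrC mulrA -big_split /=.
rewrite (eq_bigr (fun _ => -1)); last by move=> i _; rewrite mulNr sign_sq.
by rewrite prodr_const card_ord.
Qed.

Theorem corollary2 (N : nat) (B : nat -> rat) :
  (0 < N)%N -> is_hyper_bernoulli N B ->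
  forall n : nat, (0 < n)%N ->
    B n =
      n`!%:R *
      \sum_(t : {ffun 'I_n -> 'I_n.+1} |
              (\sum_(i < n) (i.+1 * t i)%N)%N == n)
        ((\sum_(i < n) (t i : nat))%N`!%:R / (\prod_(i < n) (t i)`!)%N%:R *
         (-1) ^+ (\sum_(i < n) (t i : nat))%N *
         \prod_(i < n) (N`!%:R / ((N + i.+1)`!)%:R) ^+ t i)
    /\ N`!%:R / ((N + n)`!)%:R = \det (dmat n B).
Proof.
move=> N0 H n n0; split; last first.
  rewrite (det_dmat N B n H) -(an_cof N B n H) /aN.
  by [].
have E := b_eq_c N B n H n (leqnn n).
have -> : B n = n`!%:R * bB B n.
  by rewrite /bB mulrC -mulrA mulVf ?mulr1 ?fact_neq0.
rewrite E /cc; congr (_ * _); apply: eq_bigr => t _.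
rewrite /Mt /yt /sz /pf -mulrA; congr (_ * _).
under eq_bigr => i _ do rewrite exprNn.
by rewrite big_split /= prodrXr.
Qed.
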